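(* Let $q\ge 2$ and $k\ge 1$ be fixed integers and let $\Gamma$ be a finite, non-trivial constraint language consisting of $k$-ary relations over $[q]=\{0,1,\dots,q-1\}$. Then, for deciding satisfiability of instances of $\mathsf{CSP}(\Gamma)$ on $n$ variables presented as a single-pass stream of constraints: (a) there exists a deterministic single-pass streaming algorithm using $O_{q,k}(\mathsf{NRD}_n(\Gamma)\log n)$ bits of space; and (b) no randomized single-pass streaming algorithm (succeeding with probability at least $2/3$ on every input) uses $o(\mathsf{NRD}_n(\Gamma))$ bits of space.
   Context: An instance of $\mathsf{CSP}(\Gamma)$ on variables $x_1,\dots,x_n$ taking values in $[q]$ is a finite set of constraints, each of the form $\{R,(x_{i_1}+\lambda_{i_1},\dots,x_{i_k}+\lambda_{i_k})\}$ with $R\in\Gamma$, $(i_1,\dots,i_k)\in[n]^k$ and shifts $\lambda_{i_j}\in[q]$; an assignment $a\in[q]^n$ satisfies it if $(a_{i_1}+\lambda_{i_1},\dots,a_{i_k}+\lambda_{i_k})\in R$, with arithmetic modulo $q$. $\mathrm{Sat}(I)$ is the set of assignments satisfying every constraint of $I$; $I$ is satisfiable if $\mathrm{Sat}(I)\neq\emptyset$. A constraint $C\in I$ is redundant if $\mathrm{Sat}(I\setminus\{C\})=\mathrm{Sat}(I)$; $I$ is non-redundant if none of its constraints is redundant. $\mathsf{NRD}_n(\Gamma)$ is the maximum number of constraints in a non-redundant instance of $\mathsf{CSP}(\Gamma)$ on $n$ variables. $\Gamma$ is non-trivial if every relation in $\Gamma$ is non-empty and at least one relation in $\Gamma$ is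 a proper subset of $[q]^k$. In the streaming model the constraints arrive one at a time and at the end the algorithm must output whether the instance is satisfiable; a deterministic algorithm must always be correct, a randomized one correct with probability at least $2/3$ on every input. Hidden constants may depend on $q$, $k$ and $\Gamma$. *)

(* Defs.v *)
From HB Require Import structures.
From mathcomp Require Import all_boot all_order all_algebra.
From mathcomp Require Import reals.
Import Order.TTheory GRing.Theory Num.Theory.
Set Implicit Arguments. Unset Strict Implicit. Unset Printing Implicit Defensive.

(* Domain [q] = Z/qZ (requires 2 <= q, assumed in the theorem).
   A k-ary relation over [q] is a set of k-tuples (functions 'I_k -> 'Z_q). *)
Definition rel (q k : nat) := {set {ffun 'I_k -> 'Z_q}}.

(* A constraint on n variables: (R, (i_1..i_k), shifts per position). *)
Definition constraint (q k n : nat) :=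
  ({set {ffun 'I_k -> 'Z_q}} * {ffun 'I_k -> 'I_n} * {ffun 'I_k -> 'Z_q})%type.

Section CSP.
Variables (q k n : nat).
Implicit Types (Gamma : {set {set {ffun 'I_k -> 'Z_q}}})
  (c : constraint q k n) (I : {set constraint q k n}).

(* a constraint of CSP(Gamma): R in Gamma, and the shift lambda_{i_j} only
   depends on the variable x_{i_j} (repeated variables carry equal shifts). *)
Definition cvalid Gamma c :=
  (c.1.1 \in Gamma) &&
  [forall j1, forall j2, (c.1.2 j1 == c.1.2 j2) ==> (c.2 j1 == c.2 j2)].

Definition is_instance Gamma I := [forall c in I, cvalid Gamma c].

Definition csat (a : {ffun 'I_n -> 'Z_q}) c :=
  [ffun j => (a (c.1.2 j) + c.2 j)%R] \in c.1.1.

Definition Sat I : {set {ffun 'I_n -> 'Z_q}} :=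
  [set a | [forall c in I, csat a c]].

Definition satisfiable I := Sat I != set0.

Definition redundant I c := Sat (I :\ c) == Sat I.

Definition nonredundant I := [forall c in I, ~~ redundant I c].

Definition NRD Gamma : nat :=
  \max_(I : {set constraint q k n} | is_instance Gamma I && nonredundant I) #|I|.

Definition stream_ok Gamma (l : seq (constraint q k n)) := all (cvalid Gamma) l.
Definition instance_of (l : seq (constraint q k n)) : {set constraint q k n} :=
  [set c in l].

(* Deterministic single-pass streaming algorithm with s bits of memory:
   memory states are 'I_(2^s). *)
Record det_alg (s : nat) := DetAlg {
  d_init : 'I_(2 ^ s);
  d_step : 'I_(2 ^ s) -> constraint q k n -> 'I_(2 ^ s);
  d_out  : 'I_(2 ^ s) -> bool }.

Definition d_run s (A : det_alg s) (l : seq (constraint q k n)) :=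
  d_out A (foldl (d_step A) (d_init A) l).

Definition det_decides Gamma s (A : det_alg s) :=
  forall l, stream_ok Gamma l -> d_run A l = satisfiable (instance_of l).

(* Randomized single-pass streaming algorithm with s bits of memory:
   random initial state, random transitions (Markov kernel) and random
   output; r_out u is the probability of answering "satisfiable". *)
Record rand_alg (R : realType) (s : nat) := RandAlg {
  r_init : 'I_(2 ^ s) -> R;
  r_step : 'I_(2 ^ s) -> constraint q k n -> 'I_(2 ^ s) -> R;
  r_out  : 'I_(2 ^ s) -> R }.

Local Open Scope ring_scope.

Definition rand_wf (R : realType) s (A : rand_alg R s) : Prop :=
  (forall u, 0 <= r_init A u) /\ (\sum_u r_init A u = 1) /\
  (forall u c, (forall v, 0 <= r_step A u c v) /\ \sum_v r_step A u c v = 1) /\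
  (forall u, 0 <= r_out A u <= 1).

Definition r_dist (R : realType) s (A : rand_alg R s) (l : seq (constraint q k n))
  : 'I_(2 ^ s) -> R :=
  foldl (fun d c v => \sum_u d u * r_step A u c v) (r_init A) l.

Definition r_accept (R : realType) s (A : rand_alg R s) l : R :=
  \sum_u r_dist A l u * r_out A u.

Definition rand_decides (R : realType) Gamma s (A : rand_alg R s) : Prop :=
  rand_wf A /\
  forall l, stream_ok Gamma l ->
    if satisfiable (instance_of l) then 2 / 3 <= r_accept A l
    else r_accept A l <= 1 / 3.

Local Close Scope ring_scope.
End CSP.

Definition nontrivial (q k : nat) (Gamma : {set {set {ffun 'I_k -> 'Z_q}}}) :=
  [forall R in Gamma, R != set0] && [exists R in Gamma, R != setT].

(* Main.v *)
Require Import Defs.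
From HB Require Import structures.
From mathcomp Require Import all_boot all_order all_algebra reals.
From mathcomp Require Import ring lra zify.
From mathcomp Require Import sequences exp.
Import Order.TTheory GRing.Theory Num.Theory.


Section Count.
Variable T : finType.

Lemma count_small (V : {set T}) (m : nat) :
  #|[set J : {set T} | (J \subset V) && (#|J| <= m)]| <= (#|V| + 1) ^ m.
Proof.
elim: m => [|m IH].
  rewrite expn0; apply: (@leq_trans #|[set (set0 : {set T})]|); last by rewrite cards1.
  apply: subset_leq_card; apply/subsetP => J; rewrite !inE leqn0 => /andP[_ /eqP/cards0_eq ->].
  by rewrite eqxx.
pose pool : {set option T} := None |: [set Some x | x in V].
pose g (p : option T * {set T}) : {set T} := if p.1 is Some x then x |: p.2 else p.2.
pose Sm := [set J : {set T} | (J \subset V) && (#|J| <= m)].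
have Hpool : #|pool| = #|V| + 1.
  rewrite cardsU1 card_imset; last by move=> x y [].
  rewrite addnC; congr (_ + _).
  by case: imsetP => // -[].
apply: (@leq_trans #|g @: setX pool Sm|).
  apply: subset_leq_card; apply/subsetP => J; rewrite inE => /andP[JV Jm].
  case: (set_0Vmem J) => [J0|[x xJ]].
    apply/imsetP; exists (None, J) => //.
    by rewrite inE /= !inE eqxx /= JV J0 cards0.
  apply/imsetP; exists (Some x, J :\ x); last by rewrite /g /= setD1K.
  rewrite inE /= !inE; apply/andP; split.
    by apply/orP; right; apply/imsetP; exists x => //; apply: (subsetP JV).
  apply/andP; split; first by apply: subset_trans JV; apply: subD1set.
  by move: Jm; rewrite (cardsD1 x J) xJ add1n ltnS.
apply: (leq_trans (leq_imset_card _ _)).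
by rewrite cardsX Hpool expnS leq_mul2l IH orbT.
Qed.
End Count.

Section PartA.
Variables (q k n : nat) (Gamma : {set {set {ffun 'I_k -> 'Z_q}}}).
Implicit Types (c : constraint q k n) (I J : {set constraint q k n}) (l : seq (constraint q k n)).

Lemma Sat_setU1 c I : Sat (c |: I) = Sat I :&: [set a | csat a c].
Proof.
apply/setP => a; rewrite !inE.
apply/forall_inP/andP => [H|[/forall_inP H1 H2] c'].
  split; last by apply: H; rewrite !inE eqxx.
  by apply/forall_inP => c' Hc'; apply: H; rewrite !inE Hc' orbT.
by rewrite !inE => /orP[/eqP->//|]; apply: H1.
Qed.

Lemma Sat_set0 : Sat (set0 : {set constraint q k n}) = setT.
Proof. by apply/setP => a; rewrite !inE; apply/forall_inP => c; rewrite inE. Qed.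

Lemma Sat_subset I J : J \subset I -> Sat I \subset Sat J.
Proof.
move=> JI; apply/subsetP => a; rewrite !inE => /forall_inP H.
by apply/forall_inP => c Hc; apply: H; apply: (subsetP JI).
Qed.

Lemma instance_of_rcons l c : instance_of (rcons l c) = c |: instance_of l.
Proof. by apply/setP => x; rewrite !inE mem_rcons inE. Qed.

Lemma instance_sub I J : J \subset I -> is_instance Gamma I -> is_instance Gamma J.
Proof.
move=> JI /forall_inP H; apply/forall_inP => c Hc; apply: H; exact: (subsetP JI).
Qed.

Lemma reduce I : is_instance Gamma I ->
  exists J, [/\ is_instance Gamma J, nonredundant J & Sat J = Sat I].
Proof.
move: {-1}(#|I|) (leqnn #|I|) => m; elim: m I => [|m IH] I HI Hinst.
  exists I; split => //; apply/forall_inP => c Hc.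
  by move: HI; rewrite leqn0 => /eqP/cards0_eq H; rewrite H inE in Hc.
case: (boolP (nonredundant I)) => Hnr; first by exists I.
move: Hnr; rewrite /nonredundant negb_forall => /existsP[c]; rewrite negb_imply negbK => /andP[cI /eqP Hred].
have HI' : #|I :\ c| <= m by move: HI; rewrite (cardsD1 c I) cI add1n ltnS.
have [J [HJ1 HJ2 HJ3]] := IH (I :\ c) HI' (instance_sub _ _ (subD1set I c) Hinst).
by exists J; split => //; rewrite HJ3.
Qed.

Definition Good : {set {set constraint q k n}} := [set J | @is_instance q k n Gamma J && @nonredundant q k n J].
Definition Lst := [seq Sat J | J <- enum Good].

Lemma inst_of_ok l : stream_ok Gamma l -> is_instance Gamma (instance_of l).
Proof. by move=> /allP H; apply/forall_inP => c; rewrite inE => /H. Qed.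

Lemma mem_Lst I : is_instance Gamma I -> Sat I \in Lst.
Proof.
move=> /reduce [J [H1 H2 <-]]; apply: map_f; rewrite mem_enum inE H1 H2 //.
Qed.

Lemma alg_exists s : #|Good| <= 2 ^ s -> exists A : det_alg q k n s, det_decides Gamma A.
Proof.
move=> Hs.
have p0 : 0 < 2 ^ s := expn_gt0 2 s.
pose u0 : 'I_(2 ^ s) := Ordinal p0.
pose toU (S : {set {ffun 'I_n -> 'Z_q}}) : 'I_(2 ^ s) := insubd u0 (index S Lst).
pose toS (u : 'I_(2 ^ s)) := nth setT Lst u.
have key : forall S, S \in Lst -> toS (toU S) = S.
  move=> S HS; rewrite /toS /toU val_insubd.
  have HS' : index S Lst < 2 ^ s.
    by apply: leq_trans Hs; rewrite cardE -(size_map (@Sat q k n)) index_mem.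
  by rewrite HS' nth_index.
exists (DetAlg (toU (Sat (set0 : {set constraint q k n}))) (fun u c => toU (toS u :&: [set a | csat a c]))
               (fun u => toS u != set0)).
have step : forall l, stream_ok Gamma l ->
   foldl (fun u c => toU (toS u :&: [set a | csat a c])) (toU (Sat (set0 : {set constraint q k n}))) l
   = toU (Sat (instance_of l)).
  elim/last_ind => [|l c IH]; first by move=> _; congr (toU (Sat _)); apply/setP => x; rewrite !inE.
  rewrite /stream_ok all_rcons => /andP[Hc Hl].
  rewrite foldl_rcons IH // key; last by apply: mem_Lst; apply: inst_of_ok.
  by rewrite instance_of_rcons Sat_setU1.
move=> l Hl; rewrite /d_run /= step // key //; apply: mem_Lst; exact: inst_of_ok.
Qed.
End PartA.

Lemma leq_expbase a b e : a <= b -> a ^ e <= b ^ e.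
Proof. by move=> ab; elim: e => // e IH; rewrite !expnS leq_mul. Qed.

Section PartA2.
Variables (q k n : nat) (Gamma : {set {set {ffun 'I_k -> 'Z_q}}}).

Lemma Good_small :
  #|Good q k n Gamma| <= (#|[set c : constraint q k n | cvalid Gamma c]| + 1) ^ NRD n Gamma.
Proof.
apply: leq_trans (count_small _ _ _); apply: subset_leq_card; apply/subsetP => J.
rewrite !inE => /andP[H1 H2]; apply/andP; split.
  by apply/subsetP => c Hc; rewrite inE; move/forall_inP: H1; apply.
by apply: (leq_bigmax_cond J); rewrite H1 H2.
Qed.

Lemma Vset_card : #|[set c : constraint q k n | cvalid Gamma c]| <=
   #|Gamma| * n ^ k * #|{ffun 'I_k -> 'Z_q}|.
Proof.
apply: (@leq_trans #|setX (setX Gamma [set: {ffun 'I_k -> 'I_n}]) [set: {ffun 'I_k -> 'Z_q}]|).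
  apply: subset_leq_card; apply/subsetP => -[[R f] l]; rewrite !inE /cvalid /= => /andP[-> _].
  by [].
by rewrite !cardsX !cardsT card_ffun !card_ord.
Qed.
End PartA2.

Lemma partA (q k : nat) (Gamma : {set {set {ffun 'I_k -> 'Z_q}}}) :
  exists C N0 : nat, forall n : nat, N0 <= n ->
     exists A : det_alg q k n (C * NRD n Gamma * up_log 2 n), det_decides Gamma A.
Proof.
pose K2 := #|{ffun 'I_k -> 'Z_q}|.
exists (#|Gamma| * K2 + 1 + k), 2 => n Hn.
apply: alg_exists.
apply: (leq_trans (Good_small _ _ _ _)).
set L := up_log 2 n.
have HL : 0 < L by rewrite up_log_gt0.
have HnL : n <= 2 ^ L by apply: up_logP.
have HV : #|[set c : constraint q k n | cvalid Gamma c]| + 1 <= 2 ^ ((#|Gamma| * K2 + 1 + k) * L).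
  apply: (@leq_trans ((#|Gamma| * K2 + 1) * n ^ k)).
    rewrite mulnDl mul1n -mulnA [K2 * _]mulnC mulnA.
    apply: leq_add; first exact: (Vset_card q k n Gamma).
    by rewrite expn_gt0; move: Hn; case: (n) => //.
  apply: (@leq_trans (2 ^ (#|Gamma| * K2 + 1) * 2 ^ (L * k))).
    apply: leq_mul; first exact: ltnW (ltn_expl _ (isT : 1 < 2)).
    by rewrite expnM; apply: leq_expbase.
  rewrite -expnD leq_exp2l // mulnDl [k * L]mulnC leq_add2r.
  by rewrite -{1}(muln1 (_ + 1)) leq_mul2l HL orbT.
apply: (leq_trans (leq_expbase _ _ _ HV)).
by rewrite -expnM leq_exp2l // -!mulnA [L * _]mulnC.
Qed.


Section Dist.
Variables (R : realType) (q k n s : nat) (A : rand_alg q k n R s).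
Local Open Scope ring_scope.

Definition dfrom (d : 'I_(2 ^ s) -> R) (l : seq (constraint q k n)) :=
  foldl (fun d c v => \sum_u d u * r_step A u c v) d l.
Definition delta (u : 'I_(2 ^ s)) : 'I_(2 ^ s) -> R := fun v => (u == v)%:R.
Definition acc_from u l := \sum_v dfrom (delta u) l v * r_out A v.

Lemma sum_delta (F : 'I_(2 ^ s) -> R) u : \sum_v delta u v * F v = F u.
Proof.
rewrite (bigD1 u) //= /delta eqxx mul1r big1 ?addr0 // => v /negbTE.
by rewrite eq_sym => ->; rewrite mul0r.
Qed.

Lemma sum_delta' (F : 'I_(2 ^ s) -> R) v : \sum_u F u * delta u v = F v.
Proof.
rewrite (bigD1 v) //= /delta eqxx mulr1 big1 ?addr0 // => u /negbTE ->.
by rewrite mulr0.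
Qed.

Lemma dfrom_lin d l v : dfrom d l v = \sum_u d u * dfrom (delta u) l v.
Proof.
elim: l d => [|c l IH] d /=; first by rewrite sum_delta'.
rewrite /dfrom /= -/(dfrom _ l) IH.
under [RHS]eq_bigr => u _ do rewrite -/(dfrom _ l) IH big_distrr /=.
rewrite exchange_big /=; apply: eq_bigr => w _.
rewrite big_distrl /=; apply: eq_bigr => u _.
by rewrite sum_delta mulrA.
Qed.

Lemma r_dist_cat l1 l2 : r_dist A (l1 ++ l2) = dfrom (r_dist A l1) l2.
Proof. by rewrite /r_dist foldl_cat. Qed.

Lemma accept_cat l1 l2 :
  r_accept A (l1 ++ l2) = \sum_u r_dist A l1 u * acc_from u l2.
Proof.
rewrite /r_accept r_dist_cat.
under eq_bigr => v _ do rewrite dfrom_lin big_distrl /=.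
rewrite exchange_big /=; apply: eq_bigr => u _.
rewrite /acc_from big_distrr /=; apply: eq_bigr => v _.
by rewrite mulrA.
Qed.

Hypothesis wf : rand_wf A.

Lemma dfrom_prob d l : (forall u, 0 <= d u) -> \sum_u d u = 1 ->
  (forall v, 0 <= dfrom d l v) /\ \sum_v dfrom d l v = 1.
Proof.
case: wf => _ [_ [Hst _]].
elim: l d => [|c l IH] d d0 d1 //=.
apply: IH.
  move=> v; apply: sumr_ge0 => u _; apply: mulr_ge0 => //.
  by case: (Hst u c) => H _; apply: H.
rewrite exchange_big /=; rewrite -[RHS]d1; apply: eq_bigr => u _.
by rewrite -big_distrr /=; case: (Hst u c) => _ ->; rewrite mulr1.
Qed.

Lemma delta_prob u : (forall v, 0 <= delta u v) /\ \sum_v delta u v = 1.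
Proof.
split; first by move=> v; rewrite /delta ler0n.
under eq_bigr => v _ do rewrite -[delta u v]mulr1.
by rewrite sum_delta.
Qed.

Lemma prob_avg (d F : 'I_(2 ^ s) -> R) : (forall u, 0 <= d u) -> \sum_u d u = 1 ->
  (forall u, 0 <= F u <= 1) -> 0 <= \sum_u d u * F u <= 1.
Proof.
move=> d0 d1 F01; apply/andP; split.
  by apply: sumr_ge0 => u _; apply: mulr_ge0 => //; case/andP: (F01 u).
rewrite -[X in _ <= X]d1; apply: ler_sum => u _.
by rewrite -[X in _ <= X]mulr1; apply: ler_wpM2l => //; case/andP: (F01 u).
Qed.

Lemma acc_from01 u l : 0 <= acc_from u l <= 1.
Proof.
case: (delta_prob u) => H1 H2; case: (dfrom_prob _ l H1 H2) => H3 H4.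
apply: prob_avg => // v; case: wf => _ [_ [_ Ho]]; exact: Ho.
Qed.

Lemma r_dist_prob l : (forall v, 0 <= r_dist A l v) /\ \sum_v r_dist A l v = 1.
Proof.
case: wf => Hi [Hs _]; exact: (dfrom_prob _ l Hi Hs).
Qed.
End Dist.


Section PartB2.
Variables (q k n : nat) (Gamma : {set {set {ffun 'I_k -> 'Z_q}}}).
Implicit Types (c : constraint q k n) (I J S : {set constraint q k n}) (l : seq (constraint q k n)).

Lemma Sat_setU1' c I : Sat (c |: I) = Sat I :&: [set a | csat a c].
Proof.
apply/setP => a; rewrite !inE.
apply/forall_inP/andP => [H|[/forall_inP H1 H2] c'].
  split; last by apply: H; rewrite !inE eqxx.
  by apply/forall_inP => c' Hc'; apply: H; rewrite !inE Hc' orbT.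
by rewrite !inE => /orP[/eqP->//|]; apply: H1.
Qed.

Lemma in_eqX (T : finType) (X Y : T) (Rl : {set T}) : X = Y -> Y \in Rl -> X \in Rl.
Proof. by move=> ->. Qed.

Lemma no_common c (a b : {ffun 'I_n -> 'Z_q}) :
  1 < q -> cvalid Gamma c -> ~~ csat a c -> csat b c ->
  (forall c', c'.1 = c.1 -> cvalid Gamma c' -> csat a c' -> csat b c') -> False.
Proof.
move: c => [[Rl f] lam] q1 /andP[/= RG /forallP Hcons] na hb HT.
pose del := [ffun p => (b (f p) - a (f p))%R].
pose cj (j : nat) : constraint q k n := (Rl, f, [ffun p => (lam p + del p *+ j)%R]).
have vj : forall j, cvalid Gamma (cj j).
  move=> j; rewrite /cvalid /= RG /=; apply/forallP => p1; apply/forallP => p2.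
  apply/implyP => /eqP E; move: (Hcons p1) => /forallP /(_ p2); rewrite E eqxx /= => /eqP E2.
  by rewrite !ffunE E2 E.
have Hj : forall j, csat a (cj j.+1).
  elim => [|j IH].
    rewrite /csat /= in hb *.
    suff -> : [ffun j => (a (f j) + [ffun p => (lam p + del p *+ 1)%R] j)%R] = [ffun j => (b (f j) + lam j)%R] by [].
    apply/ffunP => p; rewrite !ffunE.
    by rewrite mulr1n; ring.
  have := HT (cj j.+1) erefl (vj _) IH; rewrite /csat /= => H'.
  suff -> : [ffun j0 => (a (f j0) + [ffun p => (lam p + del p *+ j.+2)%R] j0)%R] =
     [ffun j0 => (b (f j0) + [ffun p => (lam p + del p *+ j.+1)%R] j0)%R] by [].
  apply/ffunP => p; rewrite !ffunE.
  by rewrite mulrS; ring.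
have Hq : q.-1.+1 = q by rewrite prednK // ltnW.
have H := Hj q.-1; rewrite Hq in H.
move/negP: na; apply; rewrite /csat /= in H *.
suff <- : [ffun j0 => (a (f j0) + [ffun p => (lam p + del p *+ q)%R] j0)%R] =
     [ffun j0 => (a (f j0) + lam j0)%R] by []. apply/ffunP => p.
by rewrite !ffunE -mulr_natr pchar_Zp // mulr0 addr0.
Qed.

Lemma Sat_subset' I J : J \subset I -> Sat I \subset Sat J.
Proof.
move=> JI; apply/subsetP => a; rewrite !inE => /forall_inP H.
by apply/forall_inP => c Hc; apply: H; apply: (subsetP JI).
Qed.

Definition wit I c : {ffun 'I_n -> 'Z_q} :=
  odflt [ffun => 0%R] [pick a | (a \in Sat (I :\ c)) && ~~ csat a c].

Lemma wit_spec I c : c \in I -> ~~ redundant I c ->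
  (wit I c \in Sat (I :\ c)) && ~~ csat (wit I c) c.
Proof.
move=> cI nr; rewrite /wit; case: pickP => [a -> //| H] /=.
case/negP: nr; rewrite /redundant eqEsubset (Sat_subset' _ _ (subD1set I c)) andbT.
apply/subsetP => a Ha; move: (H a); rewrite Ha /= => /negbFE Hc.
by rewrite -(setD1K cI) Sat_setU1' inE Ha inE.
Qed.

Definition Tset I c : {set constraint q k n} :=
  [set c' | (c'.1 == c.1) && cvalid Gamma c' && csat (wit I c) c'].

Lemma main_sat I S c : 1 < q -> is_instance Gamma I -> nonredundant I -> c \in I ->
  S \subset I -> satisfiable (S :|: Tset I c) = (c \notin S).
Proof.
move=> q1 HI /forall_inP nr cI SI.
have /andP[W1 W2] := wit_spec I c cI (nr c cI).
case: (boolP (c \in S)) => cS /=.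
  apply/negbTE; rewrite /satisfiable negbK; apply/eqP/setP => b; rewrite inE.
  apply/negP; rewrite inE => /forall_inP Hb.
  apply: (no_common c (wit I c) b q1 _ W2).
  - by move/forall_inP: HI; apply.
  - by apply: Hb; rewrite inE cS.
  - move=> c' E V Ha; apply: Hb; rewrite !inE E eqxx V Ha orbT //.
apply/set0Pn; exists (wit I c); rewrite inE; apply/forall_inP => c'; rewrite inE => /orP[H|].
  move: W1; rewrite inE => /forall_inP; apply; rewrite !inE (subsetP SI) // andbT.
  by apply/eqP => E; rewrite -E H in cS.
by rewrite inE => /andP[_].
Qed.

Lemma inst_cat S (T : {set constraint q k n}) : instance_of (enum S ++ enum T) = S :|: T.
Proof. by apply/setP => x; rewrite !inE mem_cat !mem_enum. Qed.

Lemma stream_cat I S c : is_instance Gamma I -> S \subset I ->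
  stream_ok Gamma (enum S ++ enum (Tset I c)).
Proof.
move=> /forall_inP HI SI; rewrite /stream_ok all_cat; apply/andP; split.
  by apply/allP => x; rewrite mem_enum => /(subsetP SI); apply: HI.
by apply/allP => x; rewrite mem_enum inE => /andP[/andP[_ ->]].
Qed.
End PartB2.

Section Analytic.
Variable R : realType.
Local Open Scope ring_scope.
Definition cc : R := ln 2.
Definition ww (e : R) : R := expR (- (cc * e)).

Lemma cc_gt0 : 0 < cc.
Proof. by apply: ln_gt0; lra. Qed.

Lemma expR_cc : expR cc = 2.
Proof. by rewrite /cc lnK // posrE; lra. Qed.

Lemma ww_bound (g : R) : 0 <= g <= 1 -> ww g + ww (1 - g) <= 3 / 2.
Proof.
move=> /andP[g0 g1].
set y := ww g.
have y0 : 0 < y := expR_gt0 _.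
have Hw : ww (1 - g) = (1 / 2) * y^-1.
  have e1 : expR (- cc) = 1 / 2 :> R by rewrite expRN expR_cc div1r.
  have e2 : expR (cc * g) = y^-1 by rewrite /y /ww expRN invrK.
  by rewrite /ww mulrBr mulr1 opprB expRD e1 e2 mulrC.
have y1 : y <= 1 by rewrite /y /ww -expR0 ler_expR oppr_le0; apply: mulr_ge0 => //; exact: ltW cc_gt0.
have y2 : 1 / 2 <= y.
  rewrite /y /ww div1r -expR_cc -expRN ler_expR lerN2.
  by rewrite -[X in _ <= X]mulr1 ler_wpM2l //; exact: ltW cc_gt0.
rewrite Hw.
have H : (2 * y - 1) * (y - 1) <= 0 by apply: mulr_ge0_le0; lra.
have Hz : y * y^-1 = 1 by rewrite mulfV // gt_eqF.
have z0 : 0 < y^-1 by rewrite invr_gt0.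
nra.
Qed.

Lemma final_alg (N s : nat) (t : R) : 0 < t -> t ^+ 3 = 2 ^+ N ->
  (2 : R) ^+ N <= 2 ^+ s * t * (3 / 2) ^+ N -> (32 ^ N <= 27 ^ N * 8 ^ s)%N.
Proof.
move=> t0 t3 H.
set P := (2 : R) ^+ N.
have P0 : 0 < P by rewrite exprn_gt0.
have HQ : (3 / 2) ^+ N * P = 3 ^+ N :> R.
  by rewrite /P -exprMn divfK // pnatr_eq0.
have H2 : P * P <= 2 ^+ s * t * 3 ^+ N.
  rewrite -HQ mulrA; apply: ler_wpM2r; first exact: ltW.
  exact: H.
have H6 : (P * P) ^+ 3 <= (2 ^+ s * t * 3 ^+ N) ^+ 3.
  have Hx : 0 <= P * P by apply: ltW; apply: mulr_gt0.
  have Hy : 0 <= 2 ^+ s * t * 3 ^+ N :> R.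
    by apply: mulr_ge0; [apply: mulr_ge0; [exact: exprn_ge0|exact: ltW]|exact: exprn_ge0].
  by apply: lerXn2r; rewrite ?nnegrE.
rewrite !exprMn t3 -/P in H6.
have E1 : P ^+ 3 * P ^+ 3 = (32 : R) ^+ N * P.
  have -> : (32 : R) = 2 ^+ 5 by rewrite -natrX.
  by rewrite /P -!exprM -!exprD; congr (_ ^+ _); lia.
have E2 : ((2 : R) ^+ s) ^+ 3 = 8 ^+ s by rewrite -exprM mulnC exprM -natrX.
have E3 : ((3 : R) ^+ N) ^+ 3 = 27 ^+ N by rewrite -exprM mulnC exprM -natrX.
rewrite E1 E2 E3 -mulrA [P * _]mulrC mulrA ler_pM2r // mulrC in H6.
by rewrite -(ler_nat R) natrM !natrX.
Qed.
End Analytic.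


Section Lower.
Variables (R : realType) (q k n s : nat) (Gamma : {set {set {ffun 'I_k -> 'Z_q}}})
  (A : rand_alg q k n R s).
Hypothesis q1 : (1 < q)%N.
Hypothesis dec : rand_decides Gamma A.
Variable I : {set constraint q k n}.
Hypothesis HI : is_instance Gamma I.
Hypothesis HN : nonredundant I.
Local Open Scope ring_scope.

Local Notation N := #|I|.
Definition cs (i : 'I_N) : constraint q k n := enum_val i.
Lemma csI i : cs i \in I. Proof. exact: enum_valP. Qed.
Lemma cs_inj : injective cs. Proof. exact: enum_val_inj. Qed.

Definition Sx (x : {ffun 'I_N -> bool}) := cs @: [set i | x i].
Lemma Sx_sub x : Sx x \subset I.
Proof. by apply/subsetP => c /imsetP[i _ ->]; exact: csI. Qed.
Lemma cs_Sx x i : (cs i \in Sx x) = x i.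
Proof. by rewrite mem_imset ?inE //; exact: cs_inj. Qed.

Definition Tl i := enum (Tset q k n Gamma I (cs i)).
Definition gg i u := acc_from R q k n s A u (Tl i).
Definition DD x := r_dist A (enum (Sx x)).
Definition err (x : {ffun 'I_N -> bool}) (i : 'I_N) (u : 'I_(2 ^ s)) := if x i then gg i u else 1 - gg i u.
Definition EE (x : {ffun 'I_N -> bool}) (u : 'I_(2 ^ s)) := \sum_i err x i u.

Let wf : rand_wf A := proj1 dec.
Local Notation B := (N%:R / 3 : R).

Lemma DD_prob x : (forall v, 0 <= DD x v) /\ \sum_v DD x v = 1.
Proof. exact: r_dist_prob wf _. Qed.

Lemma gg01 i u : 0 <= gg i u <= 1.
Proof. exact: acc_from01 wf _ _. Qed.

Lemma err_avg x i : \sum_u DD x u * err x i u <= 1 / 3.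
Proof.
have Hd := proj2 dec (enum (Sx x) ++ Tl i) (stream_cat q k n Gamma I (Sx x) (cs i) HI (Sx_sub x)).
rewrite inst_cat main_sat // ?csI ?Sx_sub // cs_Sx accept_cat in Hd.
rewrite /err; case: (x i) Hd => /= Hd; first exact: Hd.
under eq_bigr do rewrite mulrBr mulr1.
rewrite sumrB (proj2 (DD_prob x)).
rewrite /DD /gg; lra.
Qed.

Lemma EE_avg x : \sum_u DD x u * EE x u <= B.
Proof.
rewrite /EE; under eq_bigr do rewrite big_distrr.
rewrite exchange_big /=; apply: le_trans (ler_sum _ (fun i _ => err_avg x i)) _.
rewrite sumr_const card_ord -mulr_natl; lra.
Qed.

Lemma EE_ex x : exists u, EE x u <= B.
Proof.
case: (pickP (fun u => EE x u <= B)) => [u Hu|H]; first by exists u.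
have HB : forall u, B < EE x u.
  by move=> u; move: (H u) => /negbT; rewrite real_ltNge ?num_real.
case: (DD_prob x) => D0 D1.
case: (pickP (fun u => 0 < DD x u)) => [u0 Hu0|H0].
  have := EE_avg x.
  have E : \sum_u DD x u * EE x u - B = \sum_u DD x u * (EE x u - B).
    under [RHS]eq_bigr do rewrite mulrBr.
    by rewrite sumrB -mulr_suml D1 mul1r.
  have : 0 < \sum_u DD x u * (EE x u - B).
    rewrite (bigD1 u0) //=; apply: ltr_pwDl.
      by apply: mulr_gt0 => //; rewrite subr_gt0.
    by apply: sumr_ge0 => u _; apply: mulr_ge0 => //; rewrite subr_ge0 ltW.
  rewrite -E; lra.
exfalso.
have : \sum_u DD x u = 0.
  apply: big1 => u _; apply/eqP; rewrite eq_le D0 andbT.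
  by move: (H0 u) => /negbT; rewrite real_ltNge ?num_real // negbK.
by rewrite D1 => /eqP; rewrite oner_eq0.
Qed.

Definition ind x u : R := if EE x u <= B then 1 else 0.

Lemma ind_le x u : ind x u <= expR (cc R * B) * \prod_i ww R (err x i u).
Proof.
have Hp : \prod_i ww R (err x i u) = expR (- (cc R * EE x u)).
  rewrite /ww -expR_sum; congr expR.
  by rewrite /EE mulr_sumr sumrN.
rewrite Hp -expRD /ind.
case: ifP => HE /=.
  rewrite -[leLHS](expR0 R) ler_expR subr_ge0; apply: ler_wpM2l => //; exact: ltW (cc_gt0 R).
exact: ltW (expR_gt0 _).
Qed.

Lemma count_u u : \sum_x ind x u <= expR (cc R * B) * (3 / 2) ^+ N.
Proof.
apply: le_trans (ler_sum _ (fun x _ => ind_le x u)) _.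
rewrite -mulr_sumr; apply: ler_wpM2l; first exact: ltW (expR_gt0 _).
have -> : \sum_(x : {ffun 'I_N -> bool}) \prod_i ww R (err x i u) =
    \prod_i \sum_(b : bool) ww R (if b then gg i u else 1 - gg i u).
  by rewrite bigA_distr_bigA.
have -> : (3 / 2 : R) ^+ N = \prod_(i < N) (3 / 2 : R).
  by rewrite prodr_const card_ord.
apply: ler_prod => i _; rewrite big_bool /=; apply/andP; split.
  by apply: addr_ge0; apply: ltW; apply: expR_gt0.
exact: ww_bound (gg01 i u).
Qed.

Lemma ind_ge1 x : 1 <= \sum_u ind x u.
Proof.
case: (EE_ex x) => u0 Hu0.
rewrite (bigD1 u0) //= {1}/ind Hu0 lerDl.
by apply: sumr_ge0 => u _; rewrite /ind; case: ifP.
Qed.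

Lemma main_ineq : (2 : R) ^+ N <= 2 ^+ s * expR (cc R * B) * (3 / 2) ^+ N.
Proof.
have -> : (2 : R) ^+ N = \sum_(x : {ffun 'I_N -> bool}) 1.
  by rewrite sumr_const card_ffun card_bool card_ord natrX.
apply: le_trans (ler_sum _ (fun x _ => ind_ge1 x)) _.
rewrite exchange_big /=.
apply: le_trans (ler_sum _ (fun u _ => count_u u)) _.
have HK : forall K : R, K *+ (2 ^ s) = 2 ^+ s * K by move=> K; rewrite -(mulr_natl K) natrX.
by rewrite sumr_const card_ord HK mulrA.
Qed.

Lemma lower_I : (32 ^ N <= 27 ^ N * 8 ^ s)%N.
Proof.
apply: (final_alg R N s (expR (cc R * B)) (expR_gt0 _) _ main_ineq).
rewrite -expRM_natr.
have -> : cc R * B * 3%:R = N%:R * cc R.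
  by field.
by rewrite expRM_natl expR_cc.
Qed.

End Lower.


Lemma nrd_pos (q k n : nat) (Gamma : {set {set {ffun 'I_k -> 'Z_q}}}) :
  k <= n -> nontrivial Gamma -> 0 < NRD n Gamma.
Proof.
move=> Hkn /andP[_ /existsP[R0 /andP[R0G R0T]]].
have [t tR0] : exists t, t \notin R0.
  case: (pickP (fun t => t \notin R0)) => [t Ht|H]; first by exists t.
  case/negP: R0T; apply/eqP/setP => t; rewrite inE; move: (H t) => /= /negbFE //.
pose f : {ffun 'I_k -> 'I_n} := [ffun p => widen_ord Hkn p].
have finj : injective f by move=> p1 p2; rewrite !ffunE => /(congr1 val) /= /val_inj.
pose c : constraint q k n := (R0, f, [ffun _ => 0%R]).
pose a : {ffun 'I_n -> 'Z_q} := [ffun v => (\sum_(p | f p == v) t p)%R].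
have Ha : forall p, a (f p) = t p.
  move=> p; rewrite ffunE (big_pred1 p) // => p'; rewrite /= inj_eq //.
have cv : cvalid Gamma c.
  by rewrite /cvalid /= R0G; apply/forallP => p1; apply/forallP => p2; rewrite !ffunE eqxx implybT.
have nsat : ~~ csat a c.
  rewrite /csat /=; suff -> : [ffun j => (a (f j) + [ffun=> 0%R] j)%R] = t by [].
  by apply/ffunP => p; rewrite ffunE Ha ffunE addr0.
have H1 : is_instance Gamma [set c].
  by apply/forall_inP => c'; rewrite inE => /eqP ->.
have H2 : nonredundant [set c].
  apply/forall_inP => c'; rewrite inE => /eqP ->; rewrite /redundant setDv.
  apply/negP => /eqP E.
  have : a \in Sat (set0 : {set constraint q k n}) by rewrite inE; apply/forall_inP => x; rewrite inE.
  rewrite E inE => /forall_inP /(_ c); rewrite inE eqxx => /(_ isT).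
  by apply/negP.
apply: leq_trans (leq_bigmax_cond [set c] _); first by rewrite cards1.
by rewrite H1 H2.
Qed.

Lemma final_contra (M s : nat) : 0 < M -> 20 * s <= M -> 32 ^ M <= 27 ^ M * 8 ^ s -> False.
Proof.
move=> M0 Hs H.
have e32 : forall e, 32 ^ e = 2 ^ (5 * e) by move=> e; rewrite expnM.
have e27 : forall e, 27 ^ e = 3 ^ (3 * e) by move=> e; rewrite expnM.
have e8 : forall e, 8 ^ e = 2 ^ (3 * e) by move=> e; rewrite expnM.
rewrite e32 e27 e8 in H.
have H20 := leq_expbase _ _ 20 H.
rewrite expnMn -!expnM in H20.
have H3 : 2 ^ (3 * s * 20) <= 2 ^ (3 * M) by rewrite leq_exp2l //; lia.
have H4 := leq_trans H20 (leq_mul (leqnn _) H3).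
have E : 5 * M * 20 = 97 * M + 3 * M by lia.
rewrite E expnD leq_pmul2r ?expn_gt0 // in H4.
have E2 : 3 * M * 20 = 5 * (12 * M) by lia.
rewrite E2 in H4.
have H5 : (3 ^ 5) ^ (12 * M) < (2 ^ 8) ^ (12 * M) by rewrite ltn_exp2r //; lia.
rewrite -!expnM in H5.
have H6 : 2 ^ (8 * (12 * M)) <= 2 ^ (97 * M) by rewrite leq_exp2l //; lia.
by have := leq_ltn_trans H4 (leq_trans H5 H6); rewrite ltnn.
Qed.

Theorem theorem1p1 (q k : nat) (Gamma : {set {set {ffun 'I_k -> 'Z_q}}}) :
  2 <= q -> 1 <= k -> nontrivial Gamma ->
  (* (a) deterministic algorithm with O(NRD_n(Gamma) log n) bits *)
  (exists C N0 : nat, forall n : nat, N0 <= n ->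
     exists A : det_alg q k n (C * NRD n Gamma * up_log 2 n),
       det_decides Gamma A)
  /\
  (* (b) no randomized algorithm uses o(NRD_n(Gamma)) bits *)
  (forall (R : realType) (s : nat -> nat),
     (forall n : nat, exists A : rand_alg q k n R (s n), rand_decides Gamma A) ->
     ~ (forall m : nat, exists N : nat, forall n : nat, N <= n ->
          m.+1 * s n <= NRD n Gamma)).
Proof.
move=> q2 k1 nt; split; first exact: partA.
move=> R s Hex Hsmall.
have [N0 HN0] := Hsmall 19.
pose n := N0 + k.
have [A HA] := Hex n.
have Hn : 20 * s n <= NRD n Gamma by apply: HN0; rewrite leq_addr.
have Hpos : 0 < NRD n Gamma by apply: nrd_pos nt; rewrite leq_addl.
pose P := fun I : {set constraint q k n} => is_instance Gamma I && nonredundant I.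
have P0 : P set0.
  rewrite /P; apply/andP; split; apply/forall_inP => c; rewrite inE //.
case: (@arg_maxnP _ set0 P (fun I => #|I|) P0) => I /andP[HI HN] Imax.
have HM : NRD n Gamma <= #|I| by apply/bigmax_leqP => J HJ; apply: Imax.
have := lower_I R q k n (s n) Gamma A q2 HA I HI HN.
apply: final_contra; first exact: leq_trans Hpos HM.
exact: leq_trans Hn HM.
Qed.
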